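(* Let $a>0$ with $2a/\sqrt{3}<\pi/2$, and let $(T,g_{hex})$ be the singular torus defined below. Then the systole of $(T,g_{hex})$ equals $\min\{4a,\ 2\pi\cos(2a/\sqrt{3})\}$.
   Context: Let $\Delta\subset\mathbb{R}^2$ be the hexagonal lattice generated by $(2a,0)$ and $(a,a\sqrt3)$ (its Voronoi cells are regular hexagons of inradius $a$ and circumradius $2a/\sqrt3$). On $\mathbb{R}^3$ with coordinates $(x,y,z)$ consider the continuous Riemannian metric $h=dx^2+dy^2+\cos^2\!\big(\mathrm{dist}((x,y),\Delta)\big)\,dz^2$, where $\mathrm{dist}$ is the Euclidean distance in $\mathbb{R}^2$. The length of a piecewise smooth curve $\gamma$ is $\int (h(\gamma',\gamma'))^{1/2}dt$. $(T,g_{hex})$ is the quotient of $(\mathbb{R}^3,h)$ by the group generated by the translations $T_1:(x,y,z)\mapsto(x+4a,y,z)$, $T_2:(x,y,z)\mapsto(x+2a,y+2a\sqrt3,z)$, $T_3:(x,y,z)\mapsto(x,y,z+2\pi)$; $h$ descends to a metric $g_{hex}$. The systole is the infimum of the lengths of non-contractible piecewise smooth closed curves. *)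

(* Defs.v *)
From Stdlib Require Import Reals ZArith.
From Coquelicot Require Import Coquelicot.
Open Scope R_scope.

Definition inDelta (a x y : R) : Prop :=
  exists m n : Z, x = IZR m * (2 * a) + IZR n * a /\ y = IZR n * (a * sqrt 3).

Definition distDelta (a x y : R) : R :=
  real (Glb_Rbar (fun d => exists u v : R, inDelta a u v /\
                     d = sqrt ((x - u) ^ 2 + (y - v) ^ 2))).

Definition smooth_on (f : R -> R) (s t : R) : Prop :=
  exists F : R -> R, (forall (k : nat) (u : R), ex_derive_n F k u) /\
    (forall u, s <= u <= t -> f u = F u).

Definition piecewise_smooth (gx gy gz : R -> R) : Prop :=
  exists (n : nat) (P : nat -> R),
    (1 <= n)%nat /\ P 0%nat = 0 /\ P n = 1 /\
    (forall i, (i < n)%nat -> P i < P (S i)) /\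
    (forall i, (i < n)%nat ->
       smooth_on gx (P i) (P (S i)) /\ smooth_on gy (P i) (P (S i)) /\
       smooth_on gz (P i) (P (S i))).

Definition h_speed (a : R) (x y : R) (dx dy dz : R) : R :=
  sqrt (dx ^ 2 + dy ^ 2 + (cos (distDelta a x y)) ^ 2 * dz ^ 2).

Definition h_length (a : R) (gx gy gz : R -> R) : R :=
  RInt (fun t => h_speed a (gx t) (gy t) (Derive gx t) (Derive gy t) (Derive gz t)) 0 1.

Definition inLambda (a vx vy vz : R) : Prop :=
  exists p q r : Z,
    vx = IZR p * (4 * a) + IZR q * (2 * a) /\
    vy = IZR q * (2 * a * sqrt 3) /\
    vz = IZR r * (2 * PI).

(* Non-contractible piecewise smooth closed curves in T = R^3 / Lambda,
   represented through their lifts gamma : [0,1] -> R^3: the curve is closed in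
   T iff gamma(1) - gamma(0) is in Lambda, and non-contractible iff moreover
   gamma(1) - gamma(0) <> 0 (T is a torus with universal cover R^3). *)
Definition noncontractible_loop (a : R) (gx gy gz : R -> R) : Prop :=
  piecewise_smooth gx gy gz /\
  inLambda a (gx 1 - gx 0) (gy 1 - gy 0) (gz 1 - gz 0) /\
  (gx 1 - gx 0, gy 1 - gy 0, gz 1 - gz 0) <> (0, 0, 0).

Definition systole_hex (a : R) : Rbar :=
  Glb_Rbar (fun L => exists gx gy gz : R -> R,
                noncontractible_loop a gx gy gz /\ L = h_length a gx gy gz).

(* Main.v *)
Require Import Defs.
From Stdlib Require Import Reals.
From Coquelicot Require Import Coquelicot.
From Stdlib Require Import Lra Lia Psatz ZArith FunctionalExtensionality.
Open Scope R_scope.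

Lemma glb_in (E : R -> Prop) (lo x0 : R) :
  E x0 -> (forall x, E x -> lo <= x) ->
  Glb_Rbar E = Finite (real (Glb_Rbar E)) /\
  lo <= real (Glb_Rbar E) <= x0.
Proof.
  intros H0 Hlb. destruct (Glb_Rbar_correct E) as [H1 H2].
  assert (A1 := H1 x0 H0).
  assert (A2 : Rbar_le lo (Glb_Rbar E)) by (apply H2; intros x Hx; simpl; auto).
  destruct (Glb_Rbar E) as [g| |]; simpl in *; try tauto; split; auto.
Qed.

Lemma glb_eq (E : R -> Prop) (m : R) :
  E m -> (forall x, E x -> m <= x) -> Glb_Rbar E = Finite m.
Proof.
  intros H0 Hlb. destruct (glb_in E m m H0 Hlb) as [E1 E2].
  rewrite E1. f_equal. lra.
Qed.

Lemma sqrt3_sq : sqrt 3 * sqrt 3 = 3.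
Proof. apply sqrt_sqrt; lra. Qed.
Lemma sqrt3_pos : 0 < sqrt 3.
Proof. apply sqrt_lt_R0; lra. Qed.

Definition DS (a x y : R) := fun d => exists u v : R, inDelta a u v /\
                     d = sqrt ((x - u) ^ 2 + (y - v) ^ 2).

Lemma DS_ne a x y : DS a x y (sqrt ((x - 0) ^ 2 + (y - 0) ^ 2)).
Proof. exists 0, 0; split; auto. exists 0%Z, 0%Z; split; simpl; ring. Qed.

Lemma dist_props a x y :
  0 <= distDelta a x y /\
  (forall u v, inDelta a u v -> distDelta a x y <= sqrt ((x - u) ^ 2 + (y - v) ^ 2)).
Proof.
  unfold distDelta. fold (DS a x y).
  assert (Hlb : forall d, DS a x y d -> 0 <= d).
  { intros d [u [v [_ ->]]]. apply sqrt_pos. }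
  split.
  - destruct (glb_in _ 0 _ (DS_ne a x y) Hlb) as [_ H]; lra.
  - intros u v Huv. assert (Hd : DS a x y (sqrt ((x - u) ^ 2 + (y - v) ^ 2)))
      by (exists u, v; auto).
    destruct (glb_in _ 0 _ Hd Hlb) as [_ H]; lra.
Qed.

Lemma dist_ge a x y lo :
  (forall u v, inDelta a u v -> lo <= sqrt ((x - u) ^ 2 + (y - v) ^ 2)) ->
  lo <= distDelta a x y.
Proof.
  intros H. unfold distDelta. fold (DS a x y).
  assert (Hlb : forall d, DS a x y d -> lo <= d).
  { intros d [u [v [Huv ->]]]. auto. }
  destruct (glb_in _ lo _ (DS_ne a x y) Hlb) as [_ H']; lra.
Qed.

Lemma core_cov a r3 s t : 0 < a -> 0 < r3 -> r3 * r3 = 3 -> 0 <= s <= a -> 0 <= t ->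
  s + r3 * t <= 2 * a -> 3 * (s ^ 2 + t ^ 2) <= 4 * a ^ 2.
Proof.
  intros Ha Hr Hr3 Hs Ht H.
  assert (H1 : r3 * t <= 2 * a - s) by lra.
  assert (H2 : 0 <= r3 * t) by nra.
  assert (H3 : (r3 * t) * (r3 * t) <= (2 * a - s) * (2 * a - s)) by nra.
  replace ((r3 * t) * (r3 * t)) with (3 * (t * t)) in H3 by (rewrite <- Hr3; ring).
  nra.
Qed.

Lemma cov3 a r3 s t : 0 < a -> 0 < r3 -> r3 * r3 = 3 -> 0 <= s <= 2 * a -> 0 <= t <= a * r3 ->
  3 * (s ^ 2 + t ^ 2) <= 4 * a ^ 2 \/
  3 * ((s - 2 * a) ^ 2 + t ^ 2) <= 4 * a ^ 2 \/
  3 * ((s - a) ^ 2 + (t - a * r3) ^ 2) <= 4 * a ^ 2.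
Proof.
  intros Ha Hr Hr3 Hs Ht.
  destruct (Rle_dec s a) as [Hsa|Hsa].
  - destruct (Rle_dec (s + r3 * t) (2 * a)) as [Hc|Hc].
    + left. apply (core_cov a r3); auto; lra.
    + right; right.
      replace ((s - a) ^ 2 + (t - a * r3) ^ 2) with ((a - s) ^ 2 + (a * r3 - t) ^ 2) by ring.
      apply (core_cov a r3); auto; try lra.
      replace (a - s + r3 * (a * r3 - t)) with (a - s + a * (r3 * r3) - r3 * t) by ring.
      rewrite Hr3. lra.
  - destruct (Rle_dec ((2 * a - s) + r3 * t) (2 * a)) as [Hc|Hc].
    + right; left. replace ((s - 2 * a) ^ 2 + t ^ 2) with ((2 * a - s) ^ 2 + t ^ 2) by ring.
      apply (core_cov a r3); auto; lra.
    + right; right.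
      replace ((s - a) ^ 2 + (t - a * r3) ^ 2) with ((s - a) ^ 2 + (a * r3 - t) ^ 2) by ring.
      apply (core_cov a r3); auto; try lra.
      replace (s - a + r3 * (a * r3 - t)) with (s - a + a * (r3 * r3) - r3 * t) by ring.
      rewrite Hr3. lra.
Qed.

Lemma sqrt_le_R q R0 : 0 <= R0 -> q <= R0 ^ 2 -> sqrt q <= R0.
Proof.
  intros H1 H2. rewrite <- (sqrt_pow2 R0 H1). apply sqrt_le_1_alt. auto.
Qed.

Lemma dist_le_R a x y : 0 < a -> distDelta a x y <= 2 * a / sqrt 3.
Proof.
  intros Ha. set (r3 := sqrt 3). assert (Hr := sqrt3_pos). assert (Hr3 := sqrt3_sq).
  fold r3 in Hr, Hr3.
  set (n := Int_part (y / (a * r3))).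
  destruct (base_Int_part (y / (a * r3))) as [Hn1 Hn2]. fold n in Hn1, Hn2.
  assert (Har : 0 < a * r3) by nra.
  set (t := y - IZR n * (a * r3)).
  assert (Ht : 0 <= t <= a * r3).
  { unfold t. assert (IZR n * (a * r3) <= y).
    { apply (Rmult_le_compat_r (a * r3)) in Hn1; [|lra].
      unfold Rdiv in Hn1. rewrite Rmult_assoc, Rinv_l in Hn1; lra. }
    assert (y - IZR n * (a * r3) < a * r3); [|lra].
    assert (y / (a * r3) < IZR n + 1) by lra.
    apply (Rmult_lt_compat_r (a * r3)) in H0; [|lra].
    unfold Rdiv in H0. rewrite Rmult_assoc, Rinv_l in H0; lra. }
  set (k := Int_part ((x - IZR n * a) / (2 * a))).
  destruct (base_Int_part ((x - IZR n * a) / (2 * a))) as [Hk1 Hk2]. fold k in Hk1, Hk2.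
  set (s := x - IZR n * a - IZR k * (2 * a)).
  assert (Hs : 0 <= s <= 2 * a).
  { unfold s. assert (IZR k * (2 * a) <= x - IZR n * a).
    { apply (Rmult_le_compat_r (2 * a)) in Hk1; [|lra].
      unfold Rdiv in Hk1. rewrite Rmult_assoc, Rinv_l in Hk1; lra. }
    assert (x - IZR n * a - IZR k * (2 * a) < 2 * a); [|lra].
    assert ((x - IZR n * a) / (2 * a) < IZR k + 1) by lra.
    apply (Rmult_lt_compat_r (2 * a)) in H0; [|lra].
    unfold Rdiv in H0. rewrite Rmult_assoc, Rinv_l in H0; lra. }
  destruct (dist_props a x y) as [_ Hd].
  assert (HR : (2 * a / r3) ^ 2 = 4 * a ^ 2 / 3).
  { unfold Rdiv. rewrite Rpow_mult_distr, <- Rinv_pow by lra. simpl.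
    rewrite !Rmult_1_r, Hr3. field. }
  assert (HR0 : 0 <= 2 * a / r3) by (apply Rlt_le, Rdiv_lt_0_compat; lra).
  destruct (cov3 a r3 s t Ha Hr Hr3 Hs Ht) as [C|[C|C]].
  - eapply Rle_trans; [apply (Hd (IZR k * (2 * a) + IZR n * a) (IZR n * (a * r3)))|].
    + exists k, n; auto.
    + apply sqrt_le_R; auto. rewrite HR.
      replace (x - (IZR k * (2 * a) + IZR n * a)) with s by (unfold s; ring).
      fold t. lra.
  - eapply Rle_trans; [apply (Hd (IZR (k + 1) * (2 * a) + IZR n * a) (IZR n * (a * r3)))|].
    + exists (k + 1)%Z, n; auto.
    + apply sqrt_le_R; auto. rewrite HR. rewrite plus_IZR.
      replace (x - ((IZR k + 1) * (2 * a) + IZR n * a)) with (s - 2 * a) by (unfold s; ring).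
      fold t. lra.
  - eapply Rle_trans; [apply (Hd (IZR k * (2 * a) + IZR (n + 1) * a) (IZR (n + 1) * (a * r3)))|].
    + exists k, (n + 1)%Z; auto.
    + apply sqrt_le_R; auto. rewrite HR. rewrite plus_IZR.
      replace (x - (IZR k * (2 * a) + (IZR n + 1) * a)) with (s - a) by (unfold s; ring).
      replace (y - (IZR n + 1) * (a * r3)) with (t - a * r3) by (unfold t; ring).
      lra.
Qed.

Lemma vertex_int (m n : Z) : (3 * ((1 - 2*m - n) * (1 - 2*m - n)) + (1 - 3*n) * (1 - 3*n) >= 4)%Z.
Proof.
  assert (0 <= (1 - 2*m - n) * (1 - 2*m - n))%Z by apply Z.square_nonneg.
  destruct (Z.eq_dec n 0) as [->|Hn].
  - assert (1 - 2 * m <> 0)%Z by lia. nia.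
  - destruct (Z_le_gt_dec n 0).
    + assert (1 - 3 * n >= 4)%Z by lia. nia.
    + assert (3 * n - 1 >= 2)%Z by lia. nia.
Qed.

Lemma dist_vertex a : 0 < a -> 2 * a / sqrt 3 <= distDelta a a (a / sqrt 3).
Proof.
  intros Ha. set (r3 := sqrt 3). assert (Hr := sqrt3_pos). assert (Hr3 := sqrt3_sq).
  fold r3 in Hr, Hr3.
  apply dist_ge. intros u v [m [n [-> ->]]]. fold r3.
  assert (HR0 : 0 <= 2 * a / r3) by (apply Rlt_le, Rdiv_lt_0_compat; lra).
  rewrite <- (sqrt_pow2 (2 * a / r3) HR0). apply sqrt_le_1_alt.
  assert (Z1 := vertex_int m n). apply Z.ge_le in Z1. apply IZR_le in Z1.
  rewrite plus_IZR, !mult_IZR, !minus_IZR, !mult_IZR in Z1.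
  replace (a / r3 - IZR n * (a * r3)) with (a * (1 - 3 * IZR n) / r3).
  2:{ rewrite <- Hr3. field. lra. }
  replace ((a * (1 - 3 * IZR n) / r3) ^ 2) with (a ^ 2 * ((1 - 3 * IZR n) * (1 - 3 * IZR n)) / 3).
  2:{ rewrite <- Hr3. field. lra. }
  replace ((2 * a / r3) ^ 2) with (4 * a ^ 2 / 3).
  2:{ rewrite <- Hr3. field. lra. }
  replace (a - (IZR m * (2 * a) + IZR n * a)) with (a * (1 - 2 * IZR m - IZR n)) by ring.
  set (A := (1 - 2 * IZR m - IZR n)) in *. set (B := (1 - 3 * IZR n)) in *.
  assert (0 < a ^ 2) by nra.
  apply (Rmult_le_reg_r 3); [lra|].
  replace ((a * A) ^ 2 + a ^ 2 * (B * B) / 3) with (a ^ 2 * (3 * (A * A) + B * B) / 3) by field.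
  replace (4 * a ^ 2 / 3 * 3) with (a ^ 2 * 4) by field.
  replace (a ^ 2 * (3 * (A * A) + B * B) / 3 * 3) with (a ^ 2 * (3 * (A * A) + B * B)) by field.
  apply Rmult_le_compat_l; lra.
Qed.

Lemma minkowski A B C D :
  sqrt ((A + C) ^ 2 + (B + D) ^ 2) <= sqrt (A ^ 2 + B ^ 2) + sqrt (C ^ 2 + D ^ 2).
Proof.
  set (p := sqrt (A ^ 2 + B ^ 2)). set (q := sqrt (C ^ 2 + D ^ 2)).
  assert (Hp : 0 <= p) by apply sqrt_pos. assert (Hq : 0 <= q) by apply sqrt_pos.
  assert (Hp2 : p * p = A ^ 2 + B ^ 2) by (apply sqrt_sqrt; nra).
  assert (Hq2 : q * q = C ^ 2 + D ^ 2) by (apply sqrt_sqrt; nra).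
  assert (Hpq : A * C + B * D <= p * q).
  { assert ((A * C + B * D) ^ 2 <= (p * q) ^ 2).
    { replace ((p * q) ^ 2) with ((p * p) * (q * q)) by ring. rewrite Hp2, Hq2.
      assert (H0 := pow2_ge_0 (A * D - B * C)). nra. }
    assert (0 <= p * q) by nra. nra. }
  apply sqrt_le_R; [lra|]. nra.
Qed.

Lemma sqrt2_le_abs A B : sqrt (A ^ 2 + B ^ 2) <= Rabs A + Rabs B.
Proof.
  eapply Rle_trans. { replace A with (A + 0) at 1 by ring. replace B with (0 + B) at 1 by ring.
    apply minkowski. }
  replace (A ^ 2 + 0 ^ 2) with (Rsqr A) by (unfold Rsqr; ring).
  replace (0 ^ 2 + B ^ 2) with (Rsqr B) by (unfold Rsqr; ring).
  rewrite !sqrt_Rsqr_abs. lra.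
Qed.

Lemma dist_lip a x y x' y' :
  distDelta a x y <= distDelta a x' y' + sqrt ((x - x') ^ 2 + (y - y') ^ 2).
Proof.
  assert (distDelta a x y - sqrt ((x - x') ^ 2 + (y - y') ^ 2) <= distDelta a x' y'); [|lra].
  apply dist_ge. intros u v Huv.
  destruct (dist_props a x y) as [_ Hd]. specialize (Hd u v Huv).
  assert (M := minkowski (x - x') (y - y') (x' - u) (y' - v)).
  replace (x - x' + (x' - u)) with (x - u) in M by ring.
  replace (y - y' + (y' - v)) with (y - v) in M by ring. lra.
Qed.

Lemma dist_cont a (f g : R -> R) t :
  continuous f t -> continuous g t -> continuous (fun s => distDelta a (f s) (g s)) t.
Proof.
  intros Hf Hg. apply filterlim_locally. intros eps.
  assert (He : 0 < eps / 2) by (destruct eps; simpl; lra).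
  apply filterlim_locally with (eps := mkposreal _ He) in Hf.
  apply filterlim_locally with (eps := mkposreal _ He) in Hg.
  generalize (filter_and _ _ Hf Hg). apply filter_imp.
  intros s [H1 H2]. simpl in H1, H2.
  unfold ball in *; simpl in *. unfold AbsRing_ball, abs, minus, plus, opp in *; simpl in *.
  assert (L1 := dist_lip a (f s) (g s) (f t) (g t)).
  assert (L2 := dist_lip a (f t) (g t) (f s) (g s)).
  assert (S1 := sqrt2_le_abs (f s - f t) (g s - g t)).
  assert (S2 := sqrt2_le_abs (f t - f s) (g t - g s)).
  replace ((f t - f s) ^ 2 + (g t - g s) ^ 2) with ((f s - f t) ^ 2 + (g s - g t) ^ 2) in L2 by ring.
  unfold Rminus in *. apply Rabs_def1; lra.
Qed.

Lemma cplus (f g : R -> R) t : continuous f t -> continuous g t -> continuous (fun s => f s + g s) t.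
Proof. intros; apply (continuous_plus f g); auto. Qed.
Lemma cmult (f g : R -> R) t : continuous f t -> continuous g t -> continuous (fun s => f s * g s) t.
Proof. intros; apply (continuous_mult f g); auto. Qed.
Lemma cconst (c t : R) : continuous (fun _ => c) t.
Proof. apply continuous_const. Qed.
Lemma cpow2 (f : R -> R) t : continuous f t -> continuous (fun s => f s ^ 2) t.
Proof. intros H. simpl. apply cmult; auto. apply cmult; auto. apply cconst. Qed.

Definition smooth (F : R -> R) := forall (k : nat) (u : R), ex_derive_n F k u.

Lemma smooth_ex F u : smooth F -> ex_derive F u.
Proof. intros H. exact (H 1%nat u). Qed.
Lemma smooth_cD F u : smooth F -> continuous (Derive F) u.
Proof. intros H. assert (H2 : ex_derive (Derive F) u) by exact (H 2%nat u).
  exact (ex_derive_continuous (Derive F) u H2). Qed.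
Lemma smooth_c F u : smooth F -> continuous F u.
Proof. intros H. assert (H2 : ex_derive F u) by exact (H 1%nat u).
  exact (ex_derive_continuous F u H2). Qed.

Lemma pointwise_cs X Y Z L c cd u v w :
  0 < L -> L * L = X ^ 2 + Y ^ 2 + c ^ 2 * Z ^ 2 -> 0 <= c -> c <= cd ->
  (X * u + Y * v + c ^ 2 * Z * w) / L <= sqrt (u ^ 2 + v ^ 2 + cd ^ 2 * w ^ 2).
Proof.
  intros HL HL2 Hc Hcd.
  assert (Hle : sqrt (u ^ 2 + v ^ 2 + c ^ 2 * w ^ 2) <= sqrt (u ^ 2 + v ^ 2 + cd ^ 2 * w ^ 2)).
  { apply sqrt_le_1_alt. assert (c ^ 2 <= cd ^ 2) by nra. assert (0 <= w ^ 2) by nra. nra. }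
  set (N := sqrt (u ^ 2 + v ^ 2 + c ^ 2 * w ^ 2)) in *.
  assert (HN : 0 <= N) by apply sqrt_pos.
  assert (HN2 : N * N = u ^ 2 + v ^ 2 + c ^ 2 * w ^ 2) by (apply sqrt_sqrt; nra).
  assert (K : X * u + Y * v + c ^ 2 * Z * w <= L * N).
  { set (P := X * u + Y * v + c ^ 2 * Z * w).
    assert (P ^ 2 <= (L * N) ^ 2).
    { replace ((L * N) ^ 2) with ((L * L) * (N * N)) by ring. rewrite HL2, HN2. unfold P.
      assert (H1 := pow2_ge_0 (X * v - Y * u)).
      assert (H2 := pow2_ge_0 (X * (c * w) - c * Z * u)).
      assert (H3 := pow2_ge_0 (Y * (c * w) - c * Z * v)).
      nra. }
    assert (0 <= L * N) by nra. nra. }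
  apply Rle_trans with N; auto.
  apply (Rmult_le_reg_l L); auto. unfold Rdiv. field_simplify; lra.
Qed.

Lemma cos_bound a x y : 0 < a -> 2 * a / sqrt 3 < PI / 2 ->
  0 <= cos (2 * a / sqrt 3) <= cos (distDelta a x y).
Proof.
  intros Ha Hs. assert (H0 : 0 < 2 * a / sqrt 3) by (apply Rdiv_lt_0_compat; [lra|apply sqrt3_pos]).
  destruct (dist_props a x y) as [Hd _]. assert (Hd2 := dist_le_R a x y Ha).
  assert (PI2 := PI2_RGT_0). split.
  - apply cos_ge_0; lra.
  - apply cos_decr_1; lra.
Qed.

Lemma Derive_loc (g F : R -> R) α β t : α < t < β -> (forall u, α <= u <= β -> g u = F u) ->
  Derive g t = Derive F t.
Proof.
  intros Ht Hg. apply Derive_ext_loc.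
  assert (Hd : 0 < Rmin (t - α) (β - t)) by (apply Rmin_glb_lt; lra).
  exists (mkposreal _ Hd). intros s Hs. apply Hg.
  unfold ball in Hs; simpl in Hs. unfold AbsRing_ball, abs, minus, plus, opp in Hs; simpl in Hs.
  assert (H1 := Rmin_l (t - α) (β - t)). assert (H2 := Rmin_r (t - α) (β - t)).
  apply Rabs_def2 in Hs. lra.
Qed.

Lemma piece a X Y Z L α β (gx gy gz Fx Fy Fz : R -> R) :
  0 < a -> 2 * a / sqrt 3 < PI / 2 -> 0 < L ->
  L * L = X ^ 2 + Y ^ 2 + (cos (2 * a / sqrt 3)) ^ 2 * Z ^ 2 -> α < β ->
  smooth Fx -> smooth Fy -> smooth Fz ->
  (forall u, α <= u <= β -> gx u = Fx u) ->
  (forall u, α <= u <= β -> gy u = Fy u) ->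
  (forall u, α <= u <= β -> gz u = Fz u) ->
  ex_RInt (fun t => h_speed a (gx t) (gy t) (Derive gx t) (Derive gy t) (Derive gz t)) α β /\
  (X * (gx β - gx α) + Y * (gy β - gy α) + (cos (2 * a / sqrt 3)) ^ 2 * Z * (gz β - gz α)) / L
  <= RInt (fun t => h_speed a (gx t) (gy t) (Derive gx t) (Derive gy t) (Derive gz t)) α β.
Proof.
  intros Ha Hs HL HL2 Hab SX SY SZ EX EY EZ.
  set (c := cos (2 * a / sqrt 3)) in *.
  set (spd := fun t => h_speed a (gx t) (gy t) (Derive gx t) (Derive gy t) (Derive gz t)).
  set (spdF := fun t => h_speed a (Fx t) (Fy t) (Derive Fx t) (Derive Fy t) (Derive Fz t)).
  set (wF := fun t => (X * Derive Fx t + Y * Derive Fy t + c ^ 2 * Z * Derive Fz t) / L).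
  set (G := fun t => (X * Fx t + Y * Fy t + c ^ 2 * Z * Fz t) / L).
  assert (Hmin : Rmin α β = α) by (apply Rmin_left; lra).
  assert (Hmax : Rmax α β = β) by (apply Rmax_right; lra).
  assert (Hext : forall t, Rmin α β < t < Rmax α β -> spdF t = spd t).
  { rewrite Hmin, Hmax. intros t Ht. unfold spdF, spd.
    rewrite (EX t), (EY t) by lra.
    rewrite (Derive_loc gx Fx α β t), (Derive_loc gy Fy α β t), (Derive_loc gz Fz α β t); auto. }
  assert (CspdF : forall z, continuous spdF z).
  { intros z. unfold spdF, h_speed. apply continuous_sqrt_comp.
    apply cplus; [apply cplus|]; try (apply cpow2; apply smooth_cD; auto).
    apply cmult; apply cpow2; [|apply smooth_cD; auto].
    apply continuous_cos_comp. apply dist_cont; apply smooth_c; auto. }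
  assert (Ispd : ex_RInt spd α β).
  { apply (ex_RInt_ext spdF); auto. apply (ex_RInt_continuous (V := R_CompleteNormedModule)). intros; apply CspdF. }
  split; [exact Ispd|].
  assert (IwF : is_RInt wF α β (minus (G β) (G α))).
  { apply (is_RInt_derive (V := R_CompleteNormedModule)).
    - intros x _. unfold G, wF. auto_derive.
      + repeat split; apply smooth_ex; auto.
      + change (fun x0 : R => Fx x0) with Fx. change (fun x0 : R => Fy x0) with Fy.
        change (fun x0 : R => Fz x0) with Fz. unfold Rdiv; ring.
    - intros x _. unfold wF, Rdiv. apply cmult; [|apply cconst].
      apply cplus; [apply cplus|]; apply cmult; try apply cconst; apply smooth_cD; auto. }
  assert (Hle : RInt wF α β <= RInt spd α β).
  { apply RInt_le; [lra| eexists; exact IwF | exact Ispd |].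
    intros x Hx. rewrite <- Hext by (rewrite Hmin, Hmax; lra). unfold wF, spdF, h_speed.
    destruct (cos_bound a (Fx x) (Fy x) Ha Hs).
    apply pointwise_cs; auto. }
  rewrite (is_RInt_unique _ _ _ _ IwF) in Hle.
  unfold minus, plus, opp in Hle; simpl in Hle. unfold G in Hle.
  rewrite (EX α), (EX β), (EY α), (EY β), (EZ α), (EZ β) by lra.
  replace ((X * (Fx β - Fx α) + Y * (Fy β - Fy α) + c ^ 2 * Z * (Fz β - Fz α)) / L)
    with ((X * Fx β + Y * Fy β + c ^ 2 * Z * Fz β) / L + - ((X * Fx α + Y * Fy α + c ^ 2 * Z * Fz α) / L))
    by (field; lra).
  exact Hle.
Qed.

Lemma lat_int (p q : Z) : (p, q) <> (0%Z, 0%Z) -> ((2*p+q)*(2*p+q) + 3*(q*q) >= 4)%Z.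
Proof.
  intros H. assert (0 <= (2*p+q)*(2*p+q))%Z by apply Z.square_nonneg.
  destruct (Z.eq_dec q 0) as [->|Hq].
  - assert (p <> 0)%Z by (intro; subst; auto). assert (p*p >= 1)%Z by nia. nia.
  - destruct (Z.eq_dec q 1) as [->|Hq1]; [assert (2*p+1 <> 0)%Z by lia; nia|].
    destruct (Z.eq_dec q (-1)) as [->|Hq2]; [assert (2*p-1 <> 0)%Z by lia; nia|].
    assert (q*q >= 4)%Z by nia. nia.
Qed.

Lemma lattice_lb a c X Y Z : 0 < a -> 0 <= c ->
  inLambda a X Y Z -> (X, Y, Z) <> (0, 0, 0) ->
  (4 * a) ^ 2 <= X ^ 2 + Y ^ 2 + c ^ 2 * Z ^ 2 \/
  (2 * PI * c) ^ 2 <= X ^ 2 + Y ^ 2 + c ^ 2 * Z ^ 2.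
Proof.
  intros Ha Hc [p [q [r [EX [EY EZ]]]]] Hnz.
  assert (H0 : 0 <= X ^ 2 + Y ^ 2) by nra.
  destruct (Z.eq_dec r 0) as [->|Hr].
  - left. assert (HZ : Z = 0) by (rewrite EZ; simpl; ring). subst Z.
    assert (Hpq : (p, q) <> (0%Z, 0%Z)).
    { intros Hpq. inversion Hpq. subst. apply Hnz. f_equal; [f_equal|]; simpl in *; lra. }
    assert (Z1 := lat_int p q Hpq). apply Z.ge_le, IZR_le in Z1.
    rewrite plus_IZR, !mult_IZR, plus_IZR, mult_IZR in Z1.
    rewrite EX, EY, HZ.
    replace ((IZR p * (4 * a) + IZR q * (2 * a)) ^ 2 + (IZR q * (2 * a * sqrt 3)) ^ 2 + c ^ 2 * 0 ^ 2)
      with (4 * a ^ 2 * ((2 * IZR p + IZR q) * (2 * IZR p + IZR q) + 3 * (IZR q * IZR q))).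
    2:{ replace 3 with (sqrt 3 * sqrt 3) at 1 by apply sqrt3_sq. ring. }
    assert (0 < a ^ 2) by nra.
    replace ((4 * a) ^ 2) with (4 * a ^ 2 * 4) by ring. apply Rmult_le_compat_l; lra.
  - right. assert (HZ : 4 * PI ^ 2 <= Z ^ 2).
    { rewrite EZ. assert (1 <= IZR r * IZR r).
      { destruct (Z_le_gt_dec r 0).
        - assert (IZR r <= -1) by (apply IZR_le; lia). nra.
        - assert (1 <= IZR r) by (apply IZR_le; lia). nra. }
      assert (0 < PI) by apply PI_RGT_0. nra. }
    assert (0 <= c ^ 2) by nra.
    replace ((2 * PI * c) ^ 2) with (c ^ 2 * (4 * PI ^ 2)) by ring. nra.
Qed.

Lemma curve_bound a (gx gy gz : R -> R) X Y Z L :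
  0 < a -> 2 * a / sqrt 3 < PI / 2 -> 0 < L ->
  L * L = X ^ 2 + Y ^ 2 + (cos (2 * a / sqrt 3)) ^ 2 * Z ^ 2 ->
  piecewise_smooth gx gy gz ->
  (X * (gx 1 - gx 0) + Y * (gy 1 - gy 0) + (cos (2 * a / sqrt 3)) ^ 2 * Z * (gz 1 - gz 0)) / L
  <= h_length a gx gy gz.
Proof.
  intros Ha Hs HL HL2 [n [P [Hn [HP0 [HPn [Hinc Hsm]]]]]].
  set (c := cos (2 * a / sqrt 3)) in *.
  set (spd := fun t => h_speed a (gx t) (gy t) (Derive gx t) (Derive gy t) (Derive gz t)).
  assert (K : forall k, (k <= n)%nat -> ex_RInt spd 0 (P k) /\
    (X * (gx (P k) - gx 0) + Y * (gy (P k) - gy 0) + c ^ 2 * Z * (gz (P k) - gz 0)) / L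
    <= RInt spd 0 (P k)).
  { induction k as [|k IH]; intros Hk.
    - rewrite HP0. split; [apply ex_RInt_point|]. rewrite RInt_point.
      unfold zero; simpl. replace ((X * (gx 0 - gx 0) + Y * (gy 0 - gy 0) + c ^ 2 * Z * (gz 0 - gz 0)) / L) with 0 by (field; lra). lra.
    - destruct IH as [I1 B1]; [lia|].
      assert (Hk' : (k < n)%nat) by lia.
      destruct (Hsm k Hk') as [[Fx [SX EX]] [[Fy [SY EY]] [Fz [SZ EZ]]]].
      destruct (piece a X Y Z L (P k) (P (S k)) gx gy gz Fx Fy Fz Ha Hs HL HL2 (Hinc k Hk')
                 SX SY SZ EX EY EZ) as [I2 B2].
      fold spd in I2, B2. split.
      + apply (ex_RInt_Chasles spd 0 (P k) (P (S k))); auto.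
      + rewrite <- (RInt_Chasles spd 0 (P k) (P (S k))) by auto.
        change (plus (RInt spd 0 (P k)) (RInt spd (P k) (P (S k)))) with (RInt spd 0 (P k) + RInt spd (P k) (P (S k))).
        fold c in B2.
        replace ((X * (gx (P (S k)) - gx 0) + Y * (gy (P (S k)) - gy 0) + c ^ 2 * Z * (gz (P (S k)) - gz 0)) / L)
          with ((X * (gx (P k) - gx 0) + Y * (gy (P k) - gy 0) + c ^ 2 * Z * (gz (P k) - gz 0)) / L +
                (X * (gx (P (S k)) - gx (P k)) + Y * (gy (P (S k)) - gy (P k)) + c ^ 2 * Z * (gz (P (S k)) - gz (P k))) / L)
          by (field; lra).
        lra. }
  destruct (K n (le_n n)) as [_ B]. rewrite HPn in B. exact B.
Qed.

Lemma Derive_aff x0 s u : Derive (fun t => x0 + s * t) u = s.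
Proof. apply is_derive_unique. auto_derive; auto; ring. Qed.

Lemma aff_smooth x0 s : smooth (fun t => x0 + s * t).
Proof.
  assert (H : forall j, (1 <= j)%nat -> exists K, Derive_n (fun t => x0 + s * t) j = fun _ => K).
  { induction j as [|j IH]; intros Hj; [lia|].
    destruct j as [|j].
    - exists s. apply functional_extensionality. intros u. simpl. apply Derive_aff.
    - destruct IH as [K HK]; [lia|]. exists 0. apply functional_extensionality. intros u.
      change (Derive (Derive_n (fun t => x0 + s * t) (S j)) u = 0). rewrite HK. apply Derive_const. }
  intros k u. destruct k as [|k]; [exact I|]. simpl.
  destruct k as [|k].
  - simpl. auto_derive. auto.
  - destruct (H (S k)) as [K HK]; [lia|]. rewrite HK. apply ex_derive_const.
Qed.

Lemma aff_pw x0 y0 z0 sx sy sz :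
  piecewise_smooth (fun t => x0 + sx * t) (fun t => y0 + sy * t) (fun t => z0 + sz * t).
Proof.
  exists 1%nat, INR. split; [lia|]. split; [reflexivity|]. split; [reflexivity|].
  split.
  - intros i Hi. assert (i = 0%nat) by lia. subst. simpl. lra.
  - intros i Hi. split; [|split]; eexists; (split; [apply aff_smooth| intros; reflexivity]).
Qed.

Lemma hlen_aff a x0 y0 z0 sx sy sz V :
  (forall t, h_speed a (x0 + sx * t) (y0 + sy * t) sx sy sz = V) ->
  h_length a (fun t => x0 + sx * t) (fun t => y0 + sy * t) (fun t => z0 + sz * t) = V.
Proof.
  intros H. unfold h_length.
  rewrite (RInt_ext _ (fun _ => V)).
  - rewrite RInt_const. unfold scal; simpl. unfold mult; simpl. ring.
  - intros t _. rewrite !Derive_aff. apply H.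
Qed.

Lemma horiz_len a : 0 < a ->
  h_length a (fun t => 0 + 4 * a * t) (fun t => 0 + 0 * t) (fun t => 0 + 0 * t) = 4 * a.
Proof.
  intros Ha. apply hlen_aff. intros t. unfold h_speed.
  replace ((4 * a) ^ 2 + 0 ^ 2 + cos (distDelta a (0 + 4 * a * t) (0 + 0 * t)) ^ 2 * 0 ^ 2)
    with ((4 * a) ^ 2) by ring. apply sqrt_pow2. lra.
Qed.

Lemma vert_len a : 0 < a -> 2 * a / sqrt 3 < PI / 2 ->
  h_length a (fun t => a + 0 * t) (fun t => a / sqrt 3 + 0 * t) (fun t => 0 + 2 * PI * t)
  = 2 * PI * cos (2 * a / sqrt 3).
Proof.
  intros Ha Hs. apply hlen_aff. intros t. unfold h_speed.
  replace (a + 0 * t) with a by ring. replace (a / sqrt 3 + 0 * t) with (a / sqrt 3) by ring.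
  assert (Hd : distDelta a a (a / sqrt 3) = 2 * a / sqrt 3).
  { apply Rle_antisym; [apply dist_le_R; auto|apply dist_vertex; auto]. }
  rewrite Hd. destruct (cos_bound a 0 0 Ha Hs) as [Hc _].
  replace (0 ^ 2 + 0 ^ 2 + cos (2 * a / sqrt 3) ^ 2 * (2 * PI) ^ 2)
    with ((2 * PI * cos (2 * a / sqrt 3)) ^ 2) by ring.
  apply sqrt_pow2. assert (0 < PI) by apply PI_RGT_0. nra.
Qed.

Theorem mainTheorem3 (a : R) (ha : 0 < a) (hsmall : 2 * a / sqrt 3 < PI / 2) :
  systole_hex a = Finite (Rmin (4 * a) (2 * PI * cos (2 * a / sqrt 3))).
Proof.
  unfold systole_hex. set (c := cos (2 * a / sqrt 3)).
  assert (Hc : 0 < c).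
  { unfold c. apply cos_gt_0; [|lra].
    assert (0 < 2 * a / sqrt 3) by (apply Rdiv_lt_0_compat; [lra|apply sqrt3_pos]).
    assert (0 < PI) by apply PI_RGT_0. lra. }
  assert (HPI : 0 < PI) by apply PI_RGT_0.
  apply glb_eq.
  - destruct (Rle_dec (4 * a) (2 * PI * c)) as [E|E]; [rewrite Rmin_left by lra|rewrite Rmin_right by lra].
    + exists (fun t => 0 + 4 * a * t), (fun t => 0 + 0 * t), (fun t => 0 + 0 * t).
      split; [|symmetry; apply horiz_len; auto].
      split; [apply aff_pw|]. split.
      * exists 1%Z, 0%Z, 0%Z. simpl. repeat split; ring.
      * intros H. inversion H. lra.
    + exists (fun t => a + 0 * t), (fun t => a / sqrt 3 + 0 * t), (fun t => 0 + 2 * PI * t).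
      split; [|symmetry; apply vert_len; auto].
      split; [apply aff_pw|]. split.
      * exists 0%Z, 0%Z, 1%Z. simpl. repeat split; ring.
      * intros H. inversion H. lra.
  - intros x [gx [gy [gz [[Hpw [HL Hnz]] ->]]]].
    set (X := gx 1 - gx 0) in *. set (Y := gy 1 - gy 0) in *. set (Z := gz 1 - gz 0) in *.
    set (S := X ^ 2 + Y ^ 2 + c ^ 2 * Z ^ 2).
    set (m := Rmin (4 * a) (2 * PI * c)).
    assert (Hm0 : 0 < m) by (apply Rmin_glb_lt; nra).
    assert (Hm : m ^ 2 <= S).
    { destruct (lattice_lb a c X Y Z ha (Rlt_le _ _ Hc) HL Hnz) as [H|H].
      - assert (m <= 4 * a) by apply Rmin_l. unfold S. nra.
      - assert (m <= 2 * PI * c) by apply Rmin_r. unfold S. nra. }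
    assert (HS : 0 <= S) by (unfold S; nra).
    set (L := sqrt S).
    assert (HmL : m <= L).
    { unfold L. rewrite <- (sqrt_pow2 m) by lra. apply sqrt_le_1_alt. auto. }
    assert (HLL : L * L = S) by (apply sqrt_sqrt; auto).
    assert (B := curve_bound a gx gy gz X Y Z L ha hsmall ltac:(lra) HLL Hpw).
    fold c in B. fold X Y Z in B.
    replace ((X * X + Y * Y + c ^ 2 * Z * Z) / L) with L in B.
    2:{ field_simplify; [|lra]. unfold S in HLL. rewrite <- HLL. field. lra. }
    lra.
Qed.
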